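(* A finite connected simple undirected graph $Y$ is bipartite if and only if $\kappa(Y)$ is odd.
   Context: A click at a vertex $x$ that is a source of an orientation reverses all edges incident to $x$, making $x$ a sink. Two acyclic orientations of $Y$ are $\kappa$-equivalent if one can be transformed into the other by a finite sequence of clicks; $\kappa(Y)$ is the number of $\kappa$-equivalence classes of acyclic orientations of $Y$. *)

(* Defs.v *)
From mathcomp Require Import all_boot.
Set Implicit Arguments. Unset Strict Implicit. Unset Printing Implicit Defensive.

Section Graph.
Variable T : finType.

Definition simple_graph (e : rel T) : Prop := symmetric e /\ irreflexive e.

Definition connected_graph (e : rel T) : Prop := forall x y : T, connect e x y.

Definition bipartite (e : rel T) : Prop :=
  exists c : T -> bool, forall x y, e x y -> c x != c y.

Definition is_orientation (e : rel T) (o : {set T * T}) : bool :=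
  [forall x, forall y, ((x, y) \in o) ==> e x y] &&
  [forall x, forall y, e x y ==> (((x, y) \in o) (+) ((y, x) \in o))].

Definition arc (o : {set T * T}) : rel T := fun x y => (x, y) \in o.

Definition acyclic (o : {set T * T}) : bool :=
  [forall x, forall y, arc o x y ==> ~~ connect (arc o) y x].

Definition acyc_orient (e : rel T) : {set {set T * T}} :=
  [set o | is_orientation e o && acyclic o].

Definition source (o : {set T * T}) (x : T) : bool :=
  [forall y, (y, x) \notin o].

Definition click (o : {set T * T}) (x : T) : {set T * T} :=
  [set p | if (p.1 == x) || (p.2 == x) then (p.2, p.1) \in o else p \in o].

Definition click_step : rel {set T * T} :=
  fun o o' => [exists x, source o x && (o' == click o x)].

Definition kequiv : rel {set T * T} :=
  connect (fun o o' => click_step o o' || click_step o' o).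

Definition kappa (e : rel T) : nat :=
  #|[set [set o' in acyc_orient e | kequiv o o'] | o in acyc_orient e]|.

End Graph.

(* Main.v *)
Require Import Defs.
From mathcomp Require Import all_boot all_order all_algebra zify.
Set Implicit Arguments. Unset Strict Implicit. Unset Printing Implicit Defensive.
Import Order.TTheory GRing.Theory Num.Theory.

Lemma orP1 (T : finType) (e : rel T) (o : {set T * T}) x y :
  is_orientation e o -> (x, y) \in o -> e x y.
Proof. by case/andP=> /forallP /(_ x) /forallP /(_ y) /implyP H _. Qed.

Lemma orP2 (T : finType) (e : rel T) (o : {set T * T}) x y :
  is_orientation e o -> e x y -> ((x, y) \in o) (+) ((y, x) \in o).
Proof. by case/andP=> _ /forallP /(_ x) /forallP /(_ y) /implyP H. Qed.

Lemma orientationP (T : finType) (e : rel T) (o : {set T * T}) :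
  (forall x y, (x, y) \in o -> e x y) ->
  (forall x y, e x y -> ((x, y) \in o) (+) ((y, x) \in o)) ->
  is_orientation e o.
Proof.
move=> H1 H2; apply/andP; split; apply/forallP=> x; apply/forallP=> y;
  apply/implyP; [exact: H1|exact: H2].
Qed.

Lemma in_click (T : finType) (o : {set T * T}) x a b :
  ((a, b) \in click o x) =
  (if (a == x) || (b == x) then (b, a) \in o else (a, b) \in o).
Proof. by rewrite inE. Qed.

Lemma clickK (T : finType) (o : {set T * T}) x : click (click o x) x = o.
Proof.
apply/setP=> [[a b]]; rewrite in_click.
case: ifP => H; rewrite in_click //.
  by rewrite orbC H.
by rewrite H.
Qed.

Lemma click_orient (T : finType) (e : rel T) (o : {set T * T}) x :
  symmetric e -> is_orientation e o -> is_orientation e (click o x).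
Proof.
move=> se Ho; apply: orientationP=> a b.
  rewrite in_click; case: ifP=> _ H; have := orP1 Ho H => //.
  by rewrite se.
move=> eab; rewrite !in_click orbC; case: ifP=> _.
  by rewrite addbC; exact: orP2 Ho eab.
exact: orP2 Ho eab.
Qed.

Definition rev_o (T : finType) (o : {set T * T}) : {set T * T} :=
  [set p | (p.2, p.1) \in o].

Lemma in_rev (T : finType) (o : {set T * T}) a b : ((a, b) \in rev_o o) = ((b, a) \in o).
Proof. by rewrite inE. Qed.

Lemma rev_oK (T : finType) : involutive (@rev_o T).
Proof. by move=> o; apply/setP=> [[a b]]; rewrite !in_rev. Qed.

Lemma rev_orient (T : finType) (e : rel T) (o : {set T * T}) :
  symmetric e -> is_orientation e o -> is_orientation e (rev_o o).
Proof.
move=> se Ho; apply: orientationP=> a b.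
  by rewrite in_rev se => H; exact: orP1 Ho H.
move=> H; rewrite !in_rev addbC; exact: orP2 Ho H.
Qed.

Lemma rev_acyclic (T : finType) (o : {set T * T}) : acyclic o -> acyclic (rev_o o).
Proof.
move=> /forallP H; apply/forallP=> x; apply/forallP=> y; apply/implyP.
have E: connect (Defs.arc (rev_o o)) y x = connect (Defs.arc o) x y.
  have := connect_rev (Defs.arc o) y x; rewrite /= => <-.
  by apply: eq_connect => a b; rewrite /Defs.arc in_rev.
rewrite E {1}/Defs.arc in_rev => Hyx.
by have := H y; move/forallP/(_ x)/implyP/(_ Hyx).
Qed.

Lemma connect_homo (U : finType) (r : rel U) (f : U -> U) :
  (forall a b, r a b -> r (f a) (f b)) ->
  forall a b, connect r a b -> connect r (f a) (f b).
Proof.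
move=> H a b /connectP [p pth ->]; apply/connectP; exists (map f p).
  by rewrite path_map; apply: sub_path pth => x y /H.
by rewrite last_map.
Qed.

Lemma connect_inv (U : finType) (B : Type) (r : rel U) (Q : pred U) (g : U -> B) :
  (forall a b, Q a -> r a b -> Q b /\ g a = g b) ->
  forall a b, connect r a b -> Q a -> Q b /\ g a = g b.
Proof.
move=> H a b /connectP [p]; elim: p a => [|c p IH] a /=; first by move=> _ ->.
case/andP=> rac pth eb Qa; have [Qc ->] := H a c Qa rac.
exact: IH pth eb Qc.
Qed.

Definition srel (T : finType) : rel {set T * T} :=
  fun o o' => click_step o o' || click_step o' o.

Lemma srel_sym (T : finType) : symmetric (@srel T).
Proof. by move=> a b; rewrite /srel orbC. Qed.

Lemma kequiv_sym (T : finType) (a b : {set T * T}) : kequiv a b = kequiv b a.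
Proof. exact: (sym_connect_sym (@srel_sym T)). Qed.

Lemma kequiv_trans (T : finType) (a b c : {set T * T}) : kequiv a b -> kequiv b c -> kequiv a c.
Proof. exact: connect_trans. Qed.

Lemma kequiv_step (T : finType) (a b : {set T * T}) : click_step a b -> kequiv a b.
Proof. by move=> H; apply: connect1; rewrite /srel H. Qed.

Lemma click_step_rev (T : finType) (o o' : {set T * T}) :
  click_step o o' -> click_step (rev_o o') (rev_o o).
Proof.
case/existsP=> x /andP [/forallP src /eqP ->]; apply/existsP; exists x.
apply/andP; split.
  apply/forallP=> y; rewrite in_rev in_click eqxx /=; exact: src.
apply/eqP/setP=> [[a b]]; rewrite in_click !in_rev in_click.
case: ifP=> H; first by rewrite H.
by rewrite in_click orbC H.

Qed.

Lemma kequiv_rev (T : finType) (a b : {set T * T}) :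
  kequiv a b -> kequiv (rev_o a) (rev_o b).
Proof.
apply: connect_homo => o o'; rewrite /srel => /orP [] /click_step_rev ->;
  by rewrite ?orbT.
Qed.

Lemma kequiv_revE (T : finType) (a b : {set T * T}) :
  kequiv (rev_o a) b = kequiv a (rev_o b).
Proof.
apply/idP/idP => /kequiv_rev; by rewrite rev_oK.
Qed.

Local Open Scope ring_scope.

Fixpoint Dw (T : finType) (o : {set T * T}) (x0 : T) (s : seq T) : int :=
  if s is y :: s' then (if (x0, y) \in o then 1 else -1) + Dw o y s' else 0.

Lemma Dw_cat (T : finType) (o : {set T * T}) x0 s1 s2 :
  Dw o x0 (s1 ++ s2) = Dw o x0 s1 + Dw o (last x0 s1) s2.
Proof. by elim: s1 x0 => [|y s IH] x0 /=; rewrite ?add0r // IH addrA. Qed.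

Lemma Dw_parity (T : finType) (o : {set T * T}) x0 s :
  exists k : int, Dw o x0 s + (size s)%:Z = 2 * k.
Proof.
elim: s x0 => [|y s IH] x0 /=; first by exists 0.
have [k Hk] := IH y.
case: ((x0, y) \in o); [exists (k + 1) | exists k]; lia.
Qed.

Lemma Dw_rev (T : finType) (e : rel T) (o : {set T * T}) x0 s :
  is_orientation e o -> path e x0 s -> Dw (rev_o o) x0 s = - Dw o x0 s.
Proof.
move=> Ho; elim: s x0 => [|y s IH] x0 /=; first by rewrite oppr0.
case/andP=> exy /IH ->; rewrite in_rev.
have := orP2 Ho exy.
by case: ((x0, y) \in o); case: ((y, x0) \in o) => //= _; lia.
Qed.

Lemma Dw_click (T : finType) (e : rel T) (o : {set T * T}) x x0 s :
  irreflexive e -> is_orientation e o -> source o x -> path e x0 s ->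
  Dw (click o x) x0 s =
  Dw o x0 s + 2 * (count_mem x s)%:Z - 2 * (count_mem x (belast x0 s))%:Z.
Proof.
move=> ie Ho /forallP src; elim: s x0 => [|y s IH] x0 /=; first by lia.
case/andP=> exy /IH ->; rewrite in_click.
have ox := orP2 Ho exy.
case: (eqVneq x0 x) => [ex|nx].
  rewrite ex in exy ox *; have nyx : y != x by apply: contraTneq exy => ->; rewrite ie.
  have yx : ((y, x) \in o) = false by apply/negbTE/src.
  move: ox; rewrite yx addbF => xy.
  rewrite /= xy (negbTE nyx) /=; lia.
case: (eqVneq y x) => [ey|ny].
  rewrite ey in exy ox *; have yx : ((x0, x) \in o) = false by apply/negbTE/src.
  move: ox; rewrite yx addFb => xy; rewrite /= xy /=; lia.
rewrite /=; lia.
Qed.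

Lemma count_closed (T : finType) (x0 x : T) s :
  last x0 s = x0 -> count_mem x s = count_mem x (belast x0 s).
Proof.
move=> H; have := congr1 (count_mem x) (lastI x0 s).
rewrite -cats1 count_cat H /=; lia.
Qed.

Lemma Dw_click_closed (T : finType) (e : rel T) (o : {set T * T}) x x0 s :
  irreflexive e -> is_orientation e o -> source o x -> path e x0 s ->
  last x0 s = x0 -> Dw (click o x) x0 s = Dw o x0 s.
Proof.
move=> ie Ho sx pth cl; rewrite (Dw_click ie Ho sx pth) (count_closed x cl).
by rewrite addrK.
Qed.

Lemma kequiv_Dw (T : finType) (e : rel T) (o o' : {set T * T}) x0 s :
  symmetric e -> irreflexive e -> path e x0 s -> last x0 s = x0 ->
  is_orientation e o -> kequiv o o' ->
  is_orientation e o' /\ Dw o' x0 s = Dw o x0 s.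
Proof.
move=> se ie pth cl Ho K.
suff step : forall a b, is_orientation e a -> srel a b ->
    is_orientation e b /\ Dw a x0 s = Dw b x0 s.
  have := @connect_inv _ _ (@srel T) (is_orientation e) (fun o => Dw o x0 s) step o o' K Ho.
  by case=> H1 H2; split.
move=> a b Qa; rewrite /srel => /orP [] /existsP [x /andP [sx /eqP E]].
  rewrite E; split; first exact: click_orient.
  by rewrite (Dw_click_closed ie Qa sx pth cl).
have Eb : b = click a x by rewrite E clickK.
have Qb : is_orientation e b by rewrite Eb; exact: click_orient.
split => //; rewrite E (Dw_click_closed ie Qb sx pth cl) //.
Qed.

Lemma self_rev_Dw (T : finType) (e : rel T) (o : {set T * T}) x0 s :
  symmetric e -> irreflexive e -> path e x0 s -> last x0 s = x0 ->
  is_orientation e o -> kequiv o (rev_o o) -> Dw o x0 s = 0.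
Proof.
move=> se ie pth cl Ho K.
have [_ H] := kequiv_Dw se ie pth cl Ho K.
move: H; rewrite (Dw_rev Ho pth); lia.
Qed.

Lemma walk_sig (T : finType) (e : rel T) x y :
  connect e x y -> {s : seq T | path e x s && (last x s == y)}.
Proof.
move=> C; apply: (@sigW _ (fun s => path e x s && (last x s == y))); have/connectP [s p l] := C.
by exists s; rewrite p -l eqxx.
Qed.

Lemma bip_of_even (T : finType) (e : rel T) :
  connected_graph e ->
  (forall x0 s, path e x0 s -> last x0 s = x0 -> ~~ odd (size s)) -> bipartite e.
Proof.
move=> conn H; case: (pickP (fun _ : T => true)) => [r _|T0]; last by exists (fun _ => true) => x; have := T0 x.
pose p x := sval (walk_sig (conn r x)).
pose q x := sval (walk_sig (conn x r)).
have pP x : path e r (p x) && (last r (p x) == x) := svalP (walk_sig (conn r x)).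
have qP x : path e x (q x) && (last x (q x) == r) := svalP (walk_sig (conn x r)).
exists (fun x => odd (size (p x))) => x y exy.
have /andP [px /eqP lx] := pP x; have /andP [py /eqP ly] := pP y.
have /andP [qy /eqP lqy] := qP y.
have H1 := H r (p x ++ y :: q y).
rewrite cat_path lx /= exy qy last_cat lx /= lqy size_cat /= in H1.
have H2 := H r (p y ++ q y).
rewrite cat_path ly qy last_cat ly lqy size_cat in H2.
rewrite px in H1; rewrite py in H2; have {}H1 := H1 isT erefl; have {}H2 := H2 isT erefl.
move: H1 H2; rewrite !oddD /=.
by case: (odd (size (p x))); case: (odd (size (p y))); case: (odd (size (q y))).
Qed.

Lemma not_odd_of (n : nat) (k : int) : n%:Z = 2 * k -> ~~ odd n.
Proof. move=> H; apply/negP => Ho; have := odd_double_half n; rewrite Ho; lia. Qed.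

Lemma part1 (T : finType) (e : rel T) (o : {set T * T}) :
  simple_graph e -> connected_graph e ->
  is_orientation e o -> kequiv o (rev_o o) -> bipartite e.
Proof.
move=> [se ie] conn Ho K; apply: bip_of_even conn _ => x0 s pth cl.
have [k Hk] := Dw_parity o x0 s.
rewrite (self_rev_Dw se ie pth cl Ho K) add0r in Hk.
exact: not_odd_of Hk.
Qed.

Definition ori (T : finType) (e : rel T) (h : T -> int) : {set T * T} :=
  [set p | e p.1 p.2 && (h p.1 < h p.2)].

Lemma in_ori (T : finType) (e : rel T) h a b :
  ((a, b) \in ori e h) = e a b && (h a < h b).
Proof. by rewrite inE. Qed.

Lemma ori_ext (T : finType) (e : rel T) h1 h2 :
  (forall a b, e a b -> (h1 a < h1 b) = (h2 a < h2 b)) -> ori e h1 = ori e h2.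
Proof.
move=> H; apply/setP=> [[a b]]; rewrite !in_ori.
by case E: (e a b) => //=; rewrite H.
Qed.

Lemma raise (T : finType) (e : rel T) (h : T -> int) x :
  symmetric e -> (forall y, e x y -> h y = h x + 1) ->
  click_step (ori e h) (ori e (fun y => if y == x then h x + 2 else h y)).
Proof.
move=> se H; apply/existsP; exists x; apply/andP; split.
  apply/forallP=> y; rewrite in_ori /= se.
  by case E: (e x y) => //=; rewrite (H y E); lia.
apply/eqP/setP=> [[a b]]; rewrite in_click !in_ori /=.
case: (eqVneq a x) => [ea|na]; case: (eqVneq b x) => [eb|nb] /=.
- by rewrite ea eb; case: (e x x) => //=; lia.
- rewrite ea (se b x); case E: (e x b) => //=; rewrite (H b E); lia.
- rewrite eb (se a x); case E: (e x a) => //=; rewrite (H a E); lia.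
- by [].
Qed.

Lemma o_is_ori (T : finType) (e : rel T) (o : {set T * T}) (h : T -> int) :
  is_orientation e o ->
  (forall x y, e x y -> h y = h x + (if (x, y) \in o then 1 else -1)) ->
  o = ori e h.
Proof.
move=> Ho H; apply/setP=> [[a b]]; rewrite in_ori.
case E: (e a b) => /=; last first.
  by apply/negbTE; apply: contraFN E => /(orP1 Ho).
rewrite (H a b E); case: ((a, b) \in o); lia.
Qed.

Lemma potential (T : finType) (e : rel T) (o : {set T * T}) (r : T) :
  connected_graph e ->
  (forall x0 s, path e x0 s -> last x0 s = x0 -> Dw o x0 s = 0) ->
  exists h : T -> int,
    forall x y, e x y -> h y = h x + (if (x, y) \in o then 1 else -1).
Proof.
move=> conn H.
pose p x := sval (walk_sig (conn r x)).
pose q x := sval (walk_sig (conn x r)).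
have pP x : path e r (p x) && (last r (p x) == x) := svalP (walk_sig (conn r x)).
have qP x : path e x (q x) && (last x (q x) == r) := svalP (walk_sig (conn x r)).
exists (fun x => Dw o r (p x)) => x y exy.
have /andP [px /eqP lx] := pP x; have /andP [py /eqP ly] := pP y.
have /andP [qy /eqP lqy] := qP y.
have H1 := H r (p x ++ y :: q y).
rewrite cat_path lx /= exy qy last_cat lx /= lqy Dw_cat lx /= px in H1.
have H2 := H r (p y ++ q y).
rewrite cat_path ly qy last_cat ly lqy Dw_cat ly py in H2.
have {}H1 := H1 isT erefl; have {}H2 := H2 isT erefl.
move: H1 H2; case: ((x, y) \in o); lia.
Qed.

Lemma descent (T : finType) (e : rel T) (m : int) (n : nat) (h : T -> int) :
  symmetric e ->
  (forall x y, e x y -> h y = h x + 1 \/ h x = h y + 1) ->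
  (forall x, m <= h x) ->
  (\sum_x `|h x - m|%N <= n)%N ->
  exists g : T -> int,
    [/\ forall x, m <= g x <= m + 1,
        forall x y, e x y -> g y = g x + 1 \/ g x = g y + 1 &
        kequiv (ori e h) (ori e g)].
Proof.
move=> se; elim: n h => [|n IH] h Hd Hm Hs.
  exists h; split => //; last exact: connect0.
  move=> x; rewrite Hm /=.
  have : (`|h x - m|%N <= 0)%N.
    by apply: leq_trans Hs; rewrite (bigD1 x) //= leq_addr.
  lia.
case: (boolP [exists x, m + 2 <= h x]) => [/existsP [x0 Hx0]|]; last first.
  move=> /existsPn H; exists h; split => //; last exact: connect0.
  by move=> x; rewrite Hm /=; have := H x; lia.
case: (@Order.TotalTheory.arg_maxP _ _ T x0 xpredT h isT) => z _ Hz.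
have Hzx0 := Hz x0 isT.
have Hnb y : e z y -> h y = h z - 1.
  move=> ezy; have := Hz y isT; case: (Hd z y ezy); lia.
pose h' y := if y == z then h z - 2 else h y.
have [g [G1 G2 G3]] : exists g : T -> int,
    [/\ forall x, m <= g x <= m + 1,
        forall x y, e x y -> g y = g x + 1 \/ g x = g y + 1 &
        kequiv (ori e h') (ori e g)].
  apply: IH.
  - move=> a b eab; rewrite /h'.
    case: (eqVneq a z) => [ea|na]; case: (eqVneq b z) => [eb|nb].
    + by rewrite ea eb in eab; have := Hd z z eab; lia.
    + rewrite ea in eab; have := Hnb b eab; lia.
    + rewrite eb se in eab; have := Hnb a eab; lia.
    + exact: Hd.
  - by move=> a; rewrite /h'; case: eqP => _ //; lia.
  - rewrite -ltnS; apply: leq_trans Hs.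
    rewrite (bigD1 z) //= [X in (_ < X)%N](bigD1 z) //= /h' eqxx.
    rewrite (eq_bigr (fun x => `|h x - m|%N)); last first.
      by move=> i /negbTE ->.
    have := Hzx0; lia.
exists g; split => //.
apply: kequiv_trans G3; rewrite kequiv_sym; apply: kequiv_step.
have -> : ori e h = ori e (fun y => if y == z then h' z + 2 else h' y).
  apply: ori_ext => a b _; rewrite /h' eqxx.
  by case: eqP => [->|_]; case: eqP => [->|_] //; f_equal; lia.
apply: raise => // y ezy; rewrite /h' eqxx.
case: eqP => [eyz|_]; last by rewrite (Hnb y ezy); lia.
by rewrite eyz in ezy; have := Hd z z ezy; lia.
Qed.

Definition c01 (T : finType) (c : T -> bool) (x : T) : int := if c x then 1 else 0.

Lemma rev_ori (T : finType) (e : rel T) h :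
  symmetric e -> rev_o (ori e h) = ori e (fun x => - h x).
Proof.
move=> se; apply/setP=> [[a b]]; rewrite in_rev !in_ori se ltrN2 //.
Qed.

Lemma ori_acyc (T : finType) (e : rel T) h :
  (forall x y, e x y -> h x != h y) -> symmetric e ->
  ori e h \in acyc_orient e.
Proof.
move=> Hn se; rewrite inE; apply/andP; split.
  apply: orientationP => a b; first by rewrite in_ori => /andP [].
  move=> eab; rewrite !in_ori eab se eab /=; have := Hn a b eab; lia.
apply/forallP=> x; apply/forallP=> y; apply/implyP; rewrite /Defs.arc in_ori => /andP [_ lt].
apply/negP => C.
have [H _] := @connect_inv _ _ (Defs.arc (ori e h)) (fun u => h y <= h u) (fun _ => tt)
   (fun a b Qa => (fun (ab : Defs.arc (ori e h) a b) =>
       conj (le_trans Qa (ltW (proj2 (andP (eq_ind _ is_true ab _ (in_ori e h a b)))))) erefl))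
   y x C (lexx _).
by have := le_lt_trans H lt; rewrite ltxx.
Qed.

Lemma oc_self (T : finType) (e : rel T) (c : T -> bool) :
  symmetric e -> (forall x y, e x y -> c x != c y) ->
  kequiv (ori e (c01 c)) (rev_o (ori e (c01 c))).
Proof.
move=> se Hc.
pose hs (s : seq T) x : int := if c x then 1 else if x \in s then 2 else 0.
have step : forall s, kequiv (ori e (c01 c)) (ori e (hs s)).
  elim=> [|x s IH].
    have -> : ori e (hs [::]) = ori e (c01 c).
      by apply: ori_ext => a b _; rewrite /hs /c01.
    exact: connect0.
  apply: kequiv_trans IH _.
  case E: (c x || (x \in s)).
    have -> : ori e (hs (x :: s)) = ori e (hs s).
      apply: ori_ext => a b _; rewrite /hs !inE.
      by case: (eqVneq a x) => [->|_]; case: (eqVneq b x) => [->|_] //=;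
        move: E; case: (c x) => //= ->.
    exact: connect0.
  move/norP: E => [/negbTE cx /negbTE xs].
  have -> : ori e (hs (x :: s)) = ori e (fun y => if y == x then hs s x + 2 else hs s y).
    apply: ori_ext => a b _; rewrite /hs !inE.
    by case: (eqVneq a x) => [->|na]; case: (eqVneq b x) => [->|nb];
      rewrite ?cx ?xs //=.
  apply: kequiv_step; apply: raise => // y exy.
  have := Hc x y exy; rewrite /hs cx xs; case: (c y) => //.
apply: kequiv_trans (step (enum T)) _.
have -> : rev_o (ori e (c01 c)) = ori e (hs (enum T)).
  rewrite rev_ori //; apply: ori_ext => a b eab; rewrite /hs /c01 !mem_enum.
  by have := Hc a b eab; case: (c a); case: (c b).
exact: connect0.
Qed.

Lemma part2 (T : finType) (e : rel T) (c : T -> bool) (o : {set T * T}) :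
  simple_graph e -> connected_graph e -> (forall x y, e x y -> c x != c y) ->
  is_orientation e o -> kequiv o (rev_o o) -> kequiv o (ori e (c01 c)).
Proof.
move=> [se ie] conn Hc Ho K.
case: (pickP (fun _ : T => true)) => [r _|T0]; last first.
  have -> : o = ori e (c01 c) by apply/setP => p; have := T0 p.1.
  exact: connect0.
have [h Hh] := @potential T e o r conn (fun x0 s pth cl => self_rev_Dw se ie pth cl Ho K).
have Eo := o_is_ori Ho Hh.
case: (@Order.TotalTheory.arg_minP _ _ T r xpredT h isT) => z _ Hz.
have [g [G1 G2 G3]] := @descent T e (h z) (\sum_x `|h x - h z|%N) h se
  (fun x y exy => ltac:(rewrite (Hh x y exy); case: ((x, y) \in o); [left|right]; lia))
  (fun x => Hz x isT) (leqnn _).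
rewrite Eo; apply: kequiv_trans G3 _.
pose f x := (g x == h z) (+) c x.
have fstep : forall a b, e a b -> f a = f b.
  move=> a b eab.
  have := Hc a b eab; have := G2 a b eab; have := G1 a; have := G1 b.
  rewrite /f; case: (c a); case: (c b) => //= Ha Hb Hab _;
    case: eqP; case: eqP => //= E1 E2; lia.
have fc : forall x, f x = f r.
  move=> x; have [_ ->] := @connect_inv _ _ e xpredT f
     (fun a b _ eab => conj isT (fstep a b eab)) r x (conn r x) isT => //.
case Efr: (f r).
  have -> : ori e g = ori e (c01 c).
    apply: ori_ext => a b eab; have := fc a; have := fc b; rewrite Efr /f /c01.
    have := Hc a b eab; have := G1 a; have := G1 b.
    case: (c a); case: (c b) => //= Ha Hb _; case: eqP; case: eqP => //= E1 E2 _ _; lia.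
  exact: connect0.
rewrite kequiv_sym; apply: kequiv_trans (oc_self se Hc) _.
have -> : rev_o (ori e (c01 c)) = ori e g.
  rewrite rev_ori //; apply: ori_ext => a b eab; have := fc a; have := fc b; rewrite Efr /f /c01.
  have := Hc a b eab; have := G1 a; have := G1 b.
  case: (c a); case: (c b) => //= Ha Hb _; case: eqP; case: eqP => //= E1 E2 _ _; lia.
exact: connect0.
Qed.

Lemma inv_parity (U : finType) (R : U -> U) (K : {set U}) :
  (forall S, S \in K -> R S \in K) -> (forall S, S \in K -> R (R S) = S) ->
  odd #|K| = odd #|[set S in K | R S == S]|.
Proof.
have [n lt] := ubnP #|K|; elim: n K lt => // n IH K lt HK HR.
case: (boolP [exists S in K, R S != S]) => [/exists_inP [S SK nS]|]; last first.
  move/exists_inPn => H.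
  suff -> : [set S in K | R S == S] = K by [].
  apply/setP => S; rewrite inE.
  by case SK: (S \in K) => //=; have := H S SK; rewrite negbK.
have RSK := HK S SK.
pose K' := K :\ S :\ R S.
have cK : #|K| = (#|K'| + 2)%N.
  rewrite (cardsD1 S K) SK (cardsD1 (R S) (K :\ S)) !inE nS RSK /=.
  rewrite /K'; lia.
have fixE : [set S0 in K | R S0 == S0] = [set S0 in K' | R S0 == S0].
  apply/setP => T0; rewrite !inE.
  case: (eqVneq T0 S) => [->|nT]; first by rewrite (negbTE nS) !andbF.
  case: (eqVneq T0 (R S)) => [->|nT2] //=.
  by rewrite (HR S SK) eq_sym (negbTE nS) andbF.
transitivity (odd #|K'|); first by rewrite cK oddD /= addbF.
rewrite fixE; apply: IH.
- by move: lt; rewrite cK; lia.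
- move=> T0; rewrite !inE => /and3P [n1 n2 TK]; rewrite (HK T0 TK) andbT.
  apply/andP; split.
    by apply: contraNneq n2 => E; rewrite -(HR T0 TK) E HR.
  by apply: contraNneq n1 => E; rewrite -(HR T0 TK) E.
- by move=> T0; rewrite !inE => /and3P [_ _ TK]; exact: HR.
Qed.

Lemma rev_A (T : finType) (e : rel T) (o : {set T * T}) :
  symmetric e -> o \in acyc_orient e -> rev_o o \in acyc_orient e.
Proof.
move=> se; rewrite !inE => /andP [Ho Ha].
by rewrite rev_orient // rev_acyclic.
Qed.

Lemma rev_AE (T : finType) (e : rel T) (o : {set T * T}) :
  symmetric e -> (rev_o o \in acyc_orient e) = (o \in acyc_orient e).
Proof.
move=> se; apply/idP/idP => [H|]; last exact: rev_A.
by rewrite -(rev_oK o); exact: rev_A.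
Qed.

Theorem corollary1 (T : finType) (e : rel T) :
  simple_graph e -> connected_graph e ->
  (bipartite e <-> odd (kappa e)).
Proof.
move=> [se ie] conn.
set A := acyc_orient e.
pose cls (o : {set T * T}) := [set o' in A | kequiv o o'].
pose Rc (S : {set {set T * T}}) := (@rev_o T) @: S.
have memR S o : (o \in Rc S) = (rev_o o \in S).
  apply/imsetP/idP => [[o1 o1S ->]|H]; first by rewrite rev_oK.
  by exists (rev_o o); rewrite ?rev_oK.
have RcE o : Rc (cls o) = cls (rev_o o).
  apply/setP => o2; rewrite memR !inE; have := @rev_AE T e o2 se; rewrite !inE => ->.
  by rewrite kequiv_revE.
have clsE a b : kequiv a b -> cls a = cls b.
  move=> K; apply/setP => o1; rewrite !inE; congr (_ && _).
  apply/idP/idP => H; first by apply: kequiv_trans H; rewrite kequiv_sym.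
  exact: kequiv_trans H.
have inC o : o \in A -> o \in cls o by move=> oA; rewrite inE oA; exact: connect0.
have fixP o : o \in A -> (Rc (cls o) == cls o) = kequiv o (rev_o o).
  move=> oA; rewrite RcE; apply/eqP/idP => [E|K]; last by rewrite -(clsE _ _ K).
  have := inC o oA; rewrite -E inE => /andP [_]; by rewrite kequiv_sym.
pose K := [set cls o | o in A].
have par : odd #|K| = odd #|[set S in K | Rc S == S]|.
  apply: inv_parity.
    by move=> S /imsetP [o oA ->]; rewrite RcE; apply/imsetP; exists (rev_o o) => //; exact: rev_A.
  by move=> S /imsetP [o oA ->]; rewrite !RcE rev_oK.
rewrite /kappa -/A -/K par.
split.
  case=> c Hc.
  have ocA : ori e (c01 c) \in A.
    by apply: ori_acyc => // x y /Hc; rewrite /c01; case: (c x); case: (c y).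
  suff -> : [set S in K | Rc S == S] = [set cls (ori e (c01 c))] by rewrite cards1.
  apply/setP => S; rewrite !inE; apply/andP/eqP => [[/imsetP [o oA ->]]|->].
    rewrite fixP // => Ko; apply: clsE.
    have Ho : is_orientation e o by move: oA; rewrite inE => /andP [].
    exact: part2 Ho Ko.
  split; first by apply/imsetP; exists (ori e (c01 c)).
  by rewrite fixP //; exact: oc_self.
move=> Hodd.
have : [set S in K | Rc S == S] != set0.
  by apply: contraTneq Hodd => ->; rewrite cards0.
case/set0Pn => S; rewrite !inE => /andP [/imsetP [o oA ->]]; rewrite fixP // => Ko.
have Ho : is_orientation e o by move: oA; rewrite inE => /andP [].
exact: part1 Ho Ko.
Qed.
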